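(* Let $\Phi=(\alpha_1,\dots,\alpha_l)$ be a list of quantifier-free first-order formulas, $\Omega$ a nonempty finite set of possible worlds over a finite domain $\Delta$, $\mathbf{P}_R=\mathrm{RMP}(\Phi,\Omega)$, and $A^{=}\mathbf{x}=\mathbf{c}$ a maximal linearly independent system of linear equations satisfied by all vertices of $\mathbf{P}_R$. Let $\eta>0$ and let $\theta$ be a point in the $\eta$-interior of $\mathbf{P}_R$. Then there is a maximizer $\lambda^*$ of the dual function $L_\theta$ over $\mathbb{R}^l$ with $A^{=}\lambda^*=0$, and every maximizer $\lambda^*$ of $L_\theta$ satisfying $A^{=}\lambda^*=0$ satisfies $\|\lambda^*\|\le\log|\Omega|/\eta$ (Euclidean norm).
   Context: For a quantifier-free formula $\alpha$ with exactly $k$ free variables, $N(\alpha,\omega)$ is the number of injective substitutions of its variables by constants of $\Delta$ making $\alpha$ true in the possible world $\omega$ (a set of ground atoms), and $Q_\omega(\alpha)=\binom{|\Delta|}{k}^{-1}(k!)^{-1}N(\alpha,\omega)$; $Q_\omega(\Phi)=(Q_\omega(\alpha_1),\dots,Q_\omega(\alpha_l))$. $\mathrm{RMP}(\Phi,\Omega)$ is the convex hull of $\{Q_\omega(\Phi):\omega\in\Omega\}$. For $\theta\in\mathbb{R}^l$ the dual function is $L_\theta(\lambda)=\langle\lambda,\theta\rangle-\log\sum_{\omega\in\Omega}\exp(\langle\lambda,Q_\omega(\Phi)\rangle)$. A point $\theta$ is in the $\eta$-interior of $\mathbf{P}_R$ if $\{\theta':A^{=}\theta'=\mathbf{c},\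 \|\theta'-\theta\|\le\eta\}\subseteq\mathbf{P}_R$. *)

(* Defs.v *)
From Stdlib Require Import Reals Lra Lia List Arith Bool.
Import ListNotations.
Open Scope R_scope.

(* Variables and constants are named by nat; predicate symbols by nat.
   The arity of an atom is the length of its argument list. *)
Inductive term : Type :=
| TVar : nat -> term
| TConst : nat -> term.

Inductive formula : Type :=
| FAtom : nat -> list term -> formula
| FEq : term -> term -> formula
| FTop : formula
| FNeg : formula -> formula
| FAnd : formula -> formula -> formula
| FOr : formula -> formula -> formula.

(* Ground atoms: predicate symbol applied to a list of constants. *)
Definition gatom : Type := (nat * list nat)%type.

(* A possible world: a set of ground atoms (as a boolean characteristic
   function; with functional extensionality equality of worlds is equality
   of sets of ground atoms). *)
Definition world : Type := gatom -> bool.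

Definition world_over (Delta : list nat) (w : world) : Prop :=
  forall (p : nat) (args : list nat),
    w (p, args) = true -> forall a, In a args -> In a Delta.

Definition term_val (env : nat -> nat) (t : term) : nat :=
  match t with TVar x => env x | TConst c => c end.

Fixpoint eval (env : nat -> nat) (w : world) (f : formula) : bool :=
  match f with
  | FAtom p ts => w (p, map (term_val env) ts)
  | FEq t1 t2 => Nat.eqb (term_val env t1) (term_val env t2)
  | FTop => true
  | FNeg g => negb (eval env w g)
  | FAnd g h => eval env w g && eval env w h
  | FOr g h => eval env w g || eval env w h
  end.

Definition term_vars (t : term) : list nat :=
  match t with TVar x => [x] | TConst _ => [] end.

Fixpoint vars (f : formula) : list nat :=
  match f with
  | FAtom _ ts => flat_map term_vars ts
  | FEq t1 t2 => term_vars t1 ++ term_vars t2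
  | FTop => []
  | FNeg g => vars g
  | FAnd g h => vars g ++ vars h
  | FOr g h => vars g ++ vars h
  end.

(* The (duplicate-free) list of free variables of a formula; k = its length. *)
Definition free_vars (f : formula) : list nat := nodup Nat.eq_dec (vars f).

Fixpoint tuples (D : list nat) (k : nat) : list (list nat) :=
  match k with
  | O => [[]]
  | S k' => flat_map (fun t => map (fun d => d :: t) D) (tuples D k')
  end.

Fixpoint nodupb (s : list nat) : bool :=
  match s with
  | [] => true
  | x :: r => negb (existsb (Nat.eqb x) r) && nodupb r
  end.

(* Injective k-tuples from D: with D duplicate-free, these are in bijection
   with the injective substitutions of k given variables by constants of D. *)
Definition inj_tuples (D : list nat) (k : nat) : list (list nat) :=
  filter nodupb (tuples D k).

Fixpoint subst_of (xs t : list nat) (x : nat) : nat :=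
  match xs, t with
  | y :: xs', c :: t' => if Nat.eqb x y then c else subst_of xs' t' x
  | _, _ => 0%nat
  end.

(* N(alpha, omega): number of injective substitutions of the free variables
   of alpha by constants of Delta making alpha true in omega. *)
Definition Ncount (Delta : list nat) (f : formula) (w : world) : nat :=
  let xs := free_vars f in
  length (filter (fun t => eval (subst_of xs t) w f)
                 (inj_tuples Delta (length xs))).

Definition Qw (Delta : list nat) (f : formula) (w : world) : R :=
  let k := length (free_vars f) in
  / C (length Delta) k * / INR (fact k) * INR (Ncount Delta f w).

(** * Vectors in R^l are functions nat -> R, only indices < l matter. *)
Definition vec := nat -> R.

Definition sumR (n : nat) (g : nat -> R) : R :=
  fold_right Rplus 0 (map g (seq 0 n)).

Definition inner (l : nat) (x y : vec) : R := sumR l (fun i => x i * y i).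

Definition norm2 (l : nat) (x : vec) : R := sqrt (inner l x x).

Definition veq (l : nat) (x y : vec) : Prop := forall i, (i < l)%nat -> x i = y i.

Definition QPhi (Delta : list nat) (Phi : list formula) (w : world) : vec :=
  fun i => Qw Delta (nth i Phi FTop) w.

Definition in_conv_hull (l : nat) (pts : list vec) (x : vec) : Prop :=
  exists wt : nat -> R,
    (forall k, (k < length pts)%nat -> 0 <= wt k) /\
    sumR (length pts) wt = 1 /\
    veq l x (fun i => sumR (length pts) (fun k => wt k * nth k pts (fun _ => 0) i)).

Definition RMP (Delta : list nat) (Phi : list formula) (Omega : list world)
  : vec -> Prop :=
  in_conv_hull (length Phi) (map (QPhi Delta Phi) Omega).

Definition is_vertex (l : nat) (P : vec -> Prop) (v : vec) : Prop :=
  P v /\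
  forall x y (t : R), P x -> P y -> 0 < t < 1 ->
    veq l v (fun i => t * x i + (1 - t) * y i) -> veq l x v /\ veq l y v.

Definition mat_vec (l : nat) (A : nat -> vec) (x : vec) : vec :=
  fun i => inner l (A i) x.

Definition satisfies (m l : nat) (A : nat -> vec) (c : vec) (x : vec) : Prop :=
  forall i, (i < m)%nat -> mat_vec l A x i = c i.

Definition lin_indep (m l : nat) (A : nat -> vec) : Prop :=
  forall mu : nat -> R,
    (forall j, (j < l)%nat -> sumR m (fun i => mu i * A i j) = 0) ->
    forall i, (i < m)%nat -> mu i = 0.

Definition max_indep_system (m l : nat) (A : nat -> vec) (c : vec)
  (P : vec -> Prop) : Prop :=
  (forall v, is_vertex l P v -> satisfies m l A c v) /\
  lin_indep m l A /\
  forall (a : vec) (b : R),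
    (forall v, is_vertex l P v -> inner l a v = b) ->
    ~ lin_indep (S m) l (fun i => if Nat.ltb i m then A i else a).

Definition eta_interior (m l : nat) (A : nat -> vec) (c : vec)
  (P : vec -> Prop) (eta : R) (theta : vec) : Prop :=
  forall theta', satisfies m l A c theta' ->
    norm2 l (fun i => theta' i - theta i) <= eta -> P theta'.

Definition Ldual (Delta : list nat) (Phi : list formula) (Omega : list world)
  (theta lam : vec) : R :=
  inner (length Phi) lam theta
  - ln (fold_right Rplus 0
          (map (fun w => exp (inner (length Phi) lam (QPhi Delta Phi w))) Omega)).

Definition is_maximizer (Delta : list nat) (Phi : list formula)
  (Omega : list world) (theta lam : vec) : Prop :=
  forall mu : vec, Ldual Delta Phi Omega theta mu <= Ldual Delta Phi Omega theta lam.

(* Main.v *)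
Require Import Defs.
From Stdlib Require Import Reals List.
From Stdlib Require Import Lra Lia Arith Classical.
Import ListNotations.
Open Scope R_scope.

Lemma fold_plus_acc (L : list R) a : fold_right Rplus a L = fold_right Rplus 0 L + a.
Proof. induction L; simpl; [lra|rewrite IHL; lra]. Qed.

Lemma sumR_0 g : sumR 0 g = 0.
Proof. reflexivity. Qed.

Lemma sumR_S n g : sumR (S n) g = sumR n g + g n.
Proof.
  unfold sumR. rewrite seq_S, map_app, fold_right_app. simpl.
  rewrite fold_plus_acc. lra.
Qed.

Lemma sumR_ext n f g : (forall i, (i < n)%nat -> f i = g i) -> sumR n f = sumR n g.
Proof.
  induction n; intros H; [reflexivity|].
  rewrite !sumR_S, IHn; [rewrite H; [reflexivity|lia]|intros; apply H; lia].
Qed.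

Lemma sumR_plus n f g : sumR n (fun i => f i + g i) = sumR n f + sumR n g.
Proof. induction n; [unfold sumR; simpl; lra|rewrite !sumR_S, IHn; lra]. Qed.

Lemma sumR_minus n f g : sumR n (fun i => f i - g i) = sumR n f - sumR n g.
Proof. induction n; [unfold sumR; simpl; lra|rewrite !sumR_S, IHn; lra]. Qed.

Lemma sumR_scal n c f : sumR n (fun i => c * f i) = c * sumR n f.
Proof. induction n; [unfold sumR; simpl; lra|rewrite !sumR_S, IHn; lra]. Qed.

Lemma sumR_scal_r n c f : sumR n (fun i => f i * c) = sumR n f * c.
Proof. induction n; [unfold sumR; simpl; lra|rewrite !sumR_S, IHn; lra]. Qed.

Lemma sumR_const0 n : sumR n (fun _ => 0) = 0.
Proof. induction n; [reflexivity|rewrite sumR_S, IHn; lra]. Qed.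

Lemma sumR_le n f g : (forall i, (i < n)%nat -> f i <= g i) -> sumR n f <= sumR n g.
Proof.
  induction n; intros H; [unfold sumR; simpl; lra|].
  rewrite !sumR_S. assert (f n <= g n) by (apply H; lia).
  assert (sumR n f <= sumR n g) by (apply IHn; intros; apply H; lia). lra.
Qed.

Lemma sumR_nonneg n f : (forall i, (i < n)%nat -> 0 <= f i) -> 0 <= sumR n f.
Proof. intros H. rewrite <- (sumR_const0 n). apply sumR_le. exact H. Qed.

Lemma sumR_swap n m F :
  sumR n (fun i => sumR m (fun j => F i j)) = sumR m (fun j => sumR n (fun i => F i j)).
Proof.
  induction n.
  - rewrite sumR_0. symmetry. apply (sumR_const0 m).
  - rewrite sumR_S, IHn, <- sumR_plus. apply sumR_ext. intros. rewrite sumR_S. reflexivity.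
Qed.

Lemma sumR_abs n f : Rabs (sumR n f) <= sumR n (fun i => Rabs (f i)).
Proof.
  induction n; [unfold sumR; simpl; rewrite Rabs_R0; lra|].
  rewrite !sumR_S. eapply Rle_trans; [apply Rabs_triang|]. lra.
Qed.

Lemma sumR_delta n k f : (k < n)%nat ->
  sumR n (fun i => (if Nat.eqb i k then 1 else 0) * f i) = f k.
Proof.
  induction n; intros Hk; [lia|].
  rewrite sumR_S. destruct (Nat.eq_dec k n) as [->|Hne].
  - rewrite Nat.eqb_refl. rewrite (sumR_ext n _ (fun _ => 0)).
    + rewrite sumR_const0; lra.
    + intros i Hi. destruct (Nat.eqb_spec i n); [lia|lra].
  - rewrite IHn by lia. destruct (Nat.eqb_spec n k); [lia|lra].
Qed.

Lemma sumR_delta1 n k : (k < n)%nat -> sumR n (fun i => if Nat.eqb i k then 1 else 0) = 1.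
Proof.
  intros Hk. transitivity (sumR n (fun i => (if Nat.eqb i k then 1 else 0) * 1)).
  - apply sumR_ext; intros; cbv beta; ring.
  - apply (sumR_delta n k (fun _ => 1)); exact Hk.
Qed.

Lemma sumR_term_le n f k : (forall i, (i < n)%nat -> 0 <= f i) -> (k < n)%nat -> f k <= sumR n f.
Proof.
  induction n; intros H Hk; [lia|].
  rewrite sumR_S. destruct (Nat.eq_dec k n) as [->|Hne].
  - assert (0 <= sumR n f) by (apply sumR_nonneg; intros; apply H; lia). lra.
  - assert (f k <= sumR n f) by (apply IHn; [intros; apply H; lia|lia]).
    assert (0 <= f n) by (apply H; lia). lra.
Qed.

Lemma inner_ext l x x' y y' : veq l x x' -> veq l y y' -> inner l x y = inner l x' y'.
Proof. intros H1 H2. unfold inner. apply sumR_ext. intros i Hi. rewrite H1, H2 by exact Hi. reflexivity. Qed.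

Lemma inner_comm l x y : inner l x y = inner l y x.
Proof. unfold inner. apply sumR_ext. intros; ring. Qed.

Lemma inner_plus_l l x y z : inner l (fun i => x i + y i) z = inner l x z + inner l y z.
Proof. unfold inner. rewrite <- sumR_plus. apply sumR_ext; intros; cbv beta; ring. Qed.

Lemma inner_minus_l l x y z : inner l (fun i => x i - y i) z = inner l x z - inner l y z.
Proof. unfold inner. rewrite <- sumR_minus. apply sumR_ext; intros; cbv beta; ring. Qed.

Lemma inner_plus_r l x y z : inner l z (fun i => x i + y i) = inner l z x + inner l z y.
Proof. rewrite inner_comm, inner_plus_l, !(inner_comm l z). reflexivity. Qed.

Lemma inner_minus_r l x y z : inner l z (fun i => x i - y i) = inner l z x - inner l z y.
Proof. rewrite inner_comm, inner_minus_l, !(inner_comm l z). reflexivity. Qed.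

Lemma inner_scal_l l c x y : inner l (fun i => c * x i) y = c * inner l x y.
Proof. unfold inner. rewrite <- sumR_scal. apply sumR_ext; intros; cbv beta; ring. Qed.

Lemma inner_scal_r l c x y : inner l x (fun i => c * y i) = c * inner l x y.
Proof. unfold inner. rewrite <- sumR_scal. apply sumR_ext; intros; cbv beta; ring. Qed.

Lemma inner_zero_l l y : inner l (fun _ => 0) y = 0.
Proof. unfold inner. transitivity (sumR l (fun _ => 0)); [apply sumR_ext; intros; ring|apply sumR_const0]. Qed.

Lemma inner_zero_r l y : inner l y (fun _ => 0) = 0.
Proof. rewrite inner_comm. apply inner_zero_l. Qed.

Lemma inner_self_nonneg l x : 0 <= inner l x x.
Proof. unfold inner. apply sumR_nonneg. intros. nra. Qed.

Lemma inner_self_zero l x : inner l x x = 0 -> forall i, (i < l)%nat -> x i = 0.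
Proof.
  intros H i Hi.
  assert (x i * x i <= inner l x x) by (apply (sumR_term_le l (fun i => x i * x i)); [intros; nra|exact Hi]).
  nra.
Qed.

Lemma inner_lip l a x y d : (forall i, (i < l)%nat -> Rabs (y i - x i) <= d) ->
  Rabs (inner l a y - inner l a x) <= sumR l (fun i => Rabs (a i)) * d.
Proof.
  intros H. rewrite <- inner_minus_r. unfold inner.
  eapply Rle_trans; [apply sumR_abs|]. rewrite <- sumR_scal_r. apply sumR_le.
  intros i Hi. rewrite Rabs_mult. apply Rmult_le_compat_l; [apply Rabs_pos|]. apply H; exact Hi.
Qed.

Lemma norm2_sq l x : norm2 l x * norm2 l x = inner l x x.
Proof. unfold norm2. apply sqrt_sqrt. apply inner_self_nonneg. Qed.

Lemma norm2_nonneg l x : 0 <= norm2 l x.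
Proof. apply sqrt_pos. Qed.

Lemma norm2_scal l s x : norm2 l (fun i => s * x i) = Rabs s * norm2 l x.
Proof.
  unfold norm2. rewrite inner_scal_l, inner_scal_r, <- Rmult_assoc.
  rewrite sqrt_mult_alt by nra. replace (sqrt (s * s)) with (Rabs s) by (rewrite <- sqrt_Rsqr_abs; reflexivity). reflexivity.
Qed.

Lemma coord_le_norm2 l x i : (i < l)%nat -> Rabs (x i) <= norm2 l x.
Proof.
  intros Hi. unfold norm2. rewrite <- sqrt_Rsqr_abs. apply sqrt_le_1_alt.
  unfold Rsqr. apply (sumR_term_le l (fun i => x i * x i)); [intros; nra|exact Hi].
Qed.


Definition dv : vec := fun _ => 0.

Lemma argmax_idx (N : nat) (h : nat -> R) : (0 < N)%nat ->
  exists k0, (k0 < N)%nat /\ forall k, (k < N)%nat -> h k <= h k0.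
Proof.
  induction N; intros HN; [lia|].
  destruct N as [|N].
  - exists 0%nat. split; [lia|]. intros k Hk. assert (k = 0%nat) by lia. subst. lra.
  - destruct IHN as [k1 [Hk1 H1]]; [lia|].
    destruct (Rle_dec (h (S N)) (h k1)).
    + exists k1. split; [lia|]. intros k Hk. destruct (Nat.eq_dec k (S N)); [subst; lra|apply H1; lia].
    + exists (S N). split; [lia|]. intros k Hk. destruct (Nat.eq_dec k (S N)); [subst; lra|].
      assert (h k <= h k1) by (apply H1; lia). lra.
Qed.

Section Hull.
Variable l : nat.
Variable pts : list vec.
Let N := length pts.
Let p k := nth k pts dv.

Lemma hull_inner_eq a x wt :
  veq l x (fun i => sumR N (fun k => wt k * p k i)) ->
  inner l a x = sumR N (fun k => wt k * inner l a (p k)).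
Proof.
  intros Hx. rewrite (inner_ext l a a x _ (fun i _ => eq_refl) Hx).
  unfold inner.
  transitivity (sumR l (fun i => sumR N (fun k => wt k * (a i * p k i)))).
  - apply sumR_ext. intros i _. rewrite <- sumR_scal. apply sumR_ext. intros; ring.
  - rewrite sumR_swap. apply sumR_ext. intros k _. rewrite <- sumR_scal. apply sumR_ext. intros; ring.
Qed.

Lemma hull_inner_const a b x : in_conv_hull l pts x ->
  (forall k, (k < N)%nat -> inner l a (p k) = b) -> inner l a x = b.
Proof.
  intros [wt [Hnn [Hs Hx]]] H. rewrite (hull_inner_eq a x wt Hx).
  transitivity (sumR N (fun k => wt k * b)).
  - apply sumR_ext. intros k Hk. rewrite H by exact Hk. reflexivity.
  - rewrite sumR_scal_r. fold N in Hs. rewrite Hs. ring.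
Qed.

Lemma hull_inner_le a M x : in_conv_hull l pts x ->
  (forall k, (k < N)%nat -> inner l a (p k) <= M) -> inner l a x <= M.
Proof.
  intros [wt [Hnn [Hs Hx]]] H. rewrite (hull_inner_eq a x wt Hx).
  apply Rle_trans with (sumR N (fun k => wt k * M)).
  - apply sumR_le. intros k Hk. apply Rmult_le_compat_l; [apply Hnn; exact Hk|apply H; exact Hk].
  - rewrite sumR_scal_r. fold N in Hs. rewrite Hs. lra.
Qed.

Lemma pt_in_hull k : (k < N)%nat -> in_conv_hull l pts (p k).
Proof.
  intros Hk. exists (fun i => if Nat.eqb i k then 1 else 0). split; [|split].
  - intros j _. destruct (Nat.eqb j k); lra.
  - apply sumR_delta1. exact Hk.
  - intros i _. symmetry. apply (sumR_delta N k (fun k => p k i)). exact Hk.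
Qed.

Lemma jensen_sq n (w q : nat -> R) :
  (forall k, (k < n)%nat -> 0 <= w k) -> sumR n w = 1 ->
  sumR n (fun k => w k * q k) * sumR n (fun k => w k * q k) <= sumR n (fun k => w k * (q k * q k)).
Proof.
  intros Hnn Hs. set (m := sumR n (fun k => w k * q k)).
  assert (H0 : 0 <= sumR n (fun k => w k * ((q k - m) * (q k - m)))).
  { apply sumR_nonneg. intros k Hk. specialize (Hnn k Hk). apply Rmult_le_pos; [exact Hnn|]. apply Rle_0_sqr. }
  assert (E : sumR n (fun k => w k * ((q k - m) * (q k - m))) =
              sumR n (fun k => w k * (q k * q k)) - 2 * m * m + m * m * sumR n w).
  { transitivity (sumR n (fun k => (w k * (q k * q k) - (2 * m) * (w k * q k)) + (m * m) * w k)).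
    - apply sumR_ext. intros; ring.
    - rewrite sumR_plus, sumR_minus, !sumR_scal. fold m. ring. }
  rewrite Hs in E. lra.
Qed.

Definition phi (u z : vec) : R := sumR l (fun i => z i * z i + u i * z i).

Lemma phi_hull u x : in_conv_hull l pts x -> forall M,
  (forall k, (k < N)%nat -> phi u (p k) <= M) -> phi u x <= M.
Proof.
  intros [wt [Hnn [Hs Hx]]] M H.
  apply Rle_trans with (sumR N (fun k => wt k * phi u (p k))).
  - unfold phi.
    transitivity (sumR l (fun i => sumR N (fun k => wt k * (p k i * p k i + u i * p k i)))).
    + apply sumR_le. intros i Hi. rewrite Hx by exact Hi.
      set (q := fun k => p k i).
      assert (J := jensen_sq N wt q Hnn Hs).
      transitivity (sumR N (fun k => wt k * (q k * q k)) + u i * sumR N (fun k => wt k * q k)).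
      * apply Rplus_le_compat_r. exact J.
      * right. rewrite <- sumR_scal, <- sumR_plus. apply sumR_ext. intros. unfold q. ring.
    + right. rewrite sumR_swap. apply sumR_ext. intros k _. rewrite <- sumR_scal. reflexivity.
  - apply Rle_trans with (sumR N (fun k => wt k * M)).
    + apply sumR_le. intros k Hk. apply Rmult_le_compat_l; [apply Hnn; exact Hk|apply H; exact Hk].
    + rewrite sumR_scal_r. fold N in Hs. rewrite Hs. lra.
Qed.

Lemma phi_segment u x y v t : veq l v (fun i => t * x i + (1 - t) * y i) ->
  t * phi u x + (1 - t) * phi u y - t * (1 - t) * inner l (fun i => x i - y i) (fun i => x i - y i) = phi u v.
Proof.
  intros Hv. unfold phi, inner.
  rewrite <- !sumR_scal, <- sumR_plus, <- sumR_minus.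
  apply sumR_ext. intros i Hi. rewrite Hv by exact Hi. ring.
Qed.

Lemma argmax_phi_vertex u k0 : (k0 < N)%nat ->
  (forall k, (k < N)%nat -> phi u (p k) <= phi u (p k0)) ->
  is_vertex l (in_conv_hull l pts) (p k0).
Proof.
  intros Hk0 Hmax. split; [apply pt_in_hull; exact Hk0|].
  intros x y t Hx Hy Ht Hv.
  assert (Px := phi_hull u x Hx _ Hmax). assert (Py := phi_hull u y Hy _ Hmax).
  assert (E := phi_segment u x y _ t Hv).
  assert (S0 := inner_self_nonneg l (fun i => x i - y i)).
  assert (Sz : inner l (fun i => x i - y i) (fun i => x i - y i) = 0).
  { assert (0 < t * (1 - t)) by nra. nra. }
  assert (Exy := inner_self_zero l _ Sz).
  split; intros i Hi; rewrite Hv by exact Hi; specialize (Exy i Hi); simpl in Exy.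
  - replace (y i) with (x i) by lra. ring.
  - replace (x i) with (y i) by lra. ring.
Qed.

Lemma vertices_to_points_gt a b : (0 < N)%nat ->
  (forall v, is_vertex l (in_conv_hull l pts) v -> inner l a v = b) ->
  forall k, (k < N)%nat -> ~ (inner l a (p k) > b).
Proof.
  intros HN Hv k Hk Hgt.
  destruct (argmax_idx N (fun j => inner l (p j) (p j)) HN) as [j [Hj HS]].
  set (S := inner l (p j) (p j)) in *.
  set (d := inner l a (p k) - b).
  assert (Hd : 0 < d) by (unfold d; lra).
  assert (HS0 : 0 <= S) by apply inner_self_nonneg.
  set (K := (S + 1) / d).
  assert (HKd : K * d = S + 1) by (unfold K; field; lra).
  assert (HK : 0 < K) by (unfold K; apply Rdiv_lt_0_compat; lra).
  set (u := fun i => 2 * K * a i).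
  destruct (argmax_idx N (fun j => phi u (p j)) HN) as [k0 [Hk0 Hmax]].
  assert (Vx := argmax_phi_vertex u k0 Hk0 Hmax).
  assert (Eb := Hv _ Vx).
  assert (Phi_eq : forall z, phi u z = inner l z z + 2 * K * inner l a z).
  { intros z. unfold phi, inner. rewrite <- sumR_scal, <- sumR_plus. apply sumR_ext. intros. unfold u. ring. }
  assert (H1 := Hmax k Hk). rewrite !Phi_eq in H1.
  assert (H2 := HS k0 Hk0). assert (H3 := inner_self_nonneg l (p k)).
  fold S in H2. fold (p k0) in H1.
  assert (Hak : inner l a (p k) = b + d) by (unfold d; ring).
  rewrite Eb, Hak in H1. nra.
Qed.

Lemma vertices_to_points a b : (0 < N)%nat ->
  (forall v, is_vertex l (in_conv_hull l pts) v -> inner l a v = b) ->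
  forall k, (k < N)%nat -> inner l a (p k) = b.
Proof.
  intros HN Hv k Hk.
  assert (G1 := vertices_to_points_gt a b HN Hv k Hk).
  assert (G2 := vertices_to_points_gt (fun i => -1 * a i) (-1 * b) HN).
  assert (Hv' : forall v, is_vertex l (in_conv_hull l pts) v -> inner l (fun i => -1 * a i) v = -1 * b).
  { intros v HV. rewrite inner_scal_l, Hv by exact HV. reflexivity. }
  specialize (G2 Hv' k Hk). rewrite inner_scal_l in G2. lra.
Qed.

End Hull.


Definition comb (m : nat) (A : nat -> vec) (nu : vec) : vec :=
  fun k => sumR m (fun j => nu j * A j k).

Lemma inner_comb l m A nu x :
  inner l x (comb m A nu) = sumR m (fun j => nu j * inner l x (A j)).
Proof.
  unfold inner, comb.
  transitivity (sumR l (fun i => sumR m (fun j => nu j * (x i * A j i)))).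
  - apply sumR_ext. intros i _. rewrite <- sumR_scal. apply sumR_ext. intros; ring.
  - rewrite sumR_swap. apply sumR_ext. intros j _. rewrite <- sumR_scal. reflexivity.
Qed.

Lemma lin_indep_S m l A : lin_indep (S m) l A -> lin_indep m l A.
Proof.
  intros H mu Hmu i Hi.
  set (mu' := fun j => if Nat.ltb j m then mu j else 0).
  assert (E := H mu'). 
  assert (Hm : forall j, (j < l)%nat -> sumR (S m) (fun i => mu' i * A i j) = 0).
  { intros j Hj. rewrite sumR_S. unfold mu' at 2. rewrite Nat.ltb_irrefl.
    rewrite Rmult_0_l, Rplus_0_r. transitivity (sumR m (fun i => mu i * A i j)); [|apply Hmu; exact Hj].
    apply sumR_ext. intros k Hk.
    unfold mu'. apply Nat.ltb_lt in Hk. rewrite Hk. reflexivity. }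
  specialize (E Hm i ltac:(lia)). unfold mu' in E. apply Nat.ltb_lt in Hi. rewrite Hi in E. exact E.
Qed.

Lemma proj_exists l m A : lin_indep m l A -> forall mu : vec, exists nu : vec,
  forall i, (i < m)%nat -> inner l (A i) (fun k => mu k - comb m A nu k) = 0.
Proof.
  revert A. induction m as [|m IH]; intros A HA mu.
  - exists (fun _ => 0). intros; lia.
  - assert (HA' := lin_indep_S m l A HA).
    destruct (IH A HA' (A m)) as [nu' Hnu'].
    set (r := fun k => A m k - comb m A nu' k) in *.
    assert (Hrr : 0 < inner l r r).
    { destruct (Rle_lt_or_eq_dec _ _ (inner_self_nonneg l r)) as [Hp|H0]; [exact Hp|].
      exfalso. assert (Z := inner_self_zero l r (eq_sym H0)).
      set (mu'' := fun j => if Nat.ltb j m then - nu' j else 1).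
      assert (Hm : forall j, (j < l)%nat -> sumR (S m) (fun i => mu'' i * A i j) = 0).
      { intros j Hj. rewrite sumR_S. unfold mu'' at 2. rewrite Nat.ltb_irrefl.
        specialize (Z j Hj). unfold r, comb in Z.
        transitivity (- sumR m (fun j0 => nu' j0 * A j0 j) + 1 * A m j); [|lra].
        apply Rplus_eq_compat_r.
        transitivity (sumR m (fun k => -1 * (nu' k * A k j))); [|rewrite sumR_scal; ring].
        apply sumR_ext. intros k Hk. unfold mu''. apply Nat.ltb_lt in Hk. rewrite Hk. ring. }
      specialize (HA mu'' Hm m ltac:(lia)). unfold mu'' in HA. rewrite Nat.ltb_irrefl in HA. lra. }
    assert (HAr : inner l (A m) r = inner l r r).
    { assert (E : inner l r r = inner l (A m) r - inner l (comb m A nu') r).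
      { unfold r at 1. apply inner_minus_l. }
      rewrite E. rewrite (inner_comm l (comb m A nu') r), inner_comb.
      rewrite (sumR_ext m _ (fun _ => 0)); [rewrite sumR_const0; ring|].
      intros j Hj. rewrite inner_comm, Hnu' by exact Hj. ring. }
    destruct (IH A HA' mu) as [nu1 Hnu1].
    set (mu1 := fun k => mu k - comb m A nu1 k) in *.
    set (t := inner l (A m) mu1 / inner l (A m) r).
    exists (fun j => if Nat.ltb j m then nu1 j - t * nu' j else t).
    assert (Heq : forall k, mu k - comb (S m) A (fun j => if Nat.ltb j m then nu1 j - t * nu' j else t) k
                  = mu1 k - t * r k).
    { intros k. unfold comb at 1. rewrite sumR_S. rewrite Nat.ltb_irrefl.
      unfold mu1, r, comb.
      rewrite (sumR_ext m _ (fun j => nu1 j * A j k - t * (nu' j * A j k))).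
      - rewrite sumR_minus, sumR_scal. ring.
      - intros j Hj. apply Nat.ltb_lt in Hj. rewrite Hj. ring. }
    intros i Hi.
    rewrite (inner_ext l (A i) (A i) _ (fun k => mu1 k + (- t) * r k)); [|intros k _; reflexivity|intros k _; rewrite Heq; ring].
    rewrite inner_plus_r, inner_scal_r.
    destruct (Nat.eq_dec i m) as [->|Hne].
    + unfold t. rewrite HAr. field. lra.
    + unfold mu1. rewrite Hnu1 by lia. rewrite inner_comm.
      unfold r. rewrite inner_minus_l, (inner_comm l (A m)), (inner_comm l (comb m A nu')).
      assert (Hz := Hnu' i ltac:(lia)). unfold r in Hz. rewrite inner_minus_r in Hz. rewrite Hz. ring.
Qed.


Lemma my_ln_le x y : 0 < x -> x <= y -> ln x <= ln y.
Proof. intros Hx [H|H]; [left; apply ln_increasing; auto|subst; lra]. Qed.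

Lemma my_exp_le a b : a <= b -> exp a <= exp b.
Proof. intros [H|H]; [left; apply exp_increasing; auto|subst; lra]. Qed.

Lemma le_eps a b : (forall eps, 0 < eps -> a <= b + eps) -> a <= b.
Proof.
  intros H. destruct (Rle_dec a b) as [h|h]; [exact h|].
  specialize (H ((a - b)/2) ltac:(lra)). lra.
Qed.

Lemma le_C_eps a C : 0 <= C -> (forall eps, 0 < eps -> a <= C * eps) -> a <= 0.
Proof.
  intros HC H. apply le_eps. intros eps He.
  assert (Hp : 0 < eps / (C + 1)) by (apply Rdiv_lt_0_compat; lra).
  specialize (H _ Hp).
  assert (C * (eps / (C + 1)) <= eps).
  { apply Rmult_le_reg_r with (C + 1); [lra|].
    replace (C * (eps / (C + 1)) * (C + 1)) with (C * eps) by (field; lra). nra. }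
  lra.
Qed.

Lemma abs_split x e : Rabs x <= e -> - e <= x <= e.
Proof. intros H. pose proof (Rle_abs x). pose proof (Rle_abs (- x)). rewrite Rabs_Ropp in H1. lra. Qed.

Definition fsum {A : Type} (g : A -> R) (L : list A) : R := fold_right Rplus 0 (map g L).

Lemma fsum_pos {A} (h : A -> R) L : L <> nil -> 0 < fsum (fun w => exp (h w)) L.
Proof.
  induction L as [|a L IH]; intros H; [congruence|]. unfold fsum in *. simpl.
  pose proof (exp_pos (h a)). destruct L as [|b L']; simpl; [lra|].
  assert (0 < fold_right Rplus 0 (map (fun w => exp (h w)) (b :: L'))) by (apply IH; congruence).
  simpl in H1. lra.
Qed.

Lemma fsum_nonneg {A} (g : A -> R) L : (forall w, In w L -> 0 <= g w) -> 0 <= fsum g L.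
Proof.
  induction L as [|a L IH]; intros H; unfold fsum in *; simpl; [lra|].
  assert (0 <= g a) by (apply H; left; auto). assert (0 <= fold_right Rplus 0 (map g L)) by (apply IH; intros; apply H; right; auto). lra.
Qed.

Lemma fsum_term {A} (g : A -> R) L w : (forall w, In w L -> 0 <= g w) -> In w L -> g w <= fsum g L.
Proof.
  induction L as [|a L IH]; intros H Hw; [destruct Hw|]. unfold fsum in *; simpl.
  destruct Hw as [->|Hw].
  - assert (0 <= fold_right Rplus 0 (map g L)) by (apply (fsum_nonneg g L); intros; apply H; right; auto). lra.
  - assert (g w <= fold_right Rplus 0 (map g L)) by (apply IH; [intros; apply H; right; auto|auto]).
    assert (0 <= g a) by (apply H; left; auto). lra.
Qed.

Lemma fsum_scal {A} (g h : A -> R) c L : (forall w, In w L -> g w = c * h w) -> fsum g L = c * fsum h L.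
Proof.
  induction L as [|a L IH]; intros H; unfold fsum in *; simpl; [ring|].
  rewrite IH by (intros; apply H; right; auto). rewrite H by (left; auto). ring.
Qed.

Lemma fsum_le {A} (g h : A -> R) L : (forall w, In w L -> g w <= h w) -> fsum g L <= fsum h L.
Proof.
  induction L as [|a L IH]; intros H; unfold fsum in *; simpl; [lra|].
  assert (g a <= h a) by (apply H; left; auto).
  assert (fold_right Rplus 0 (map g L) <= fold_right Rplus 0 (map h L)) by (apply IH; intros; apply H; right; auto). lra.
Qed.

Lemma fsum_const1 {A} (L : list A) : fsum (fun _ => 1) L = INR (length L).
Proof.
  induction L as [|a L IH]; unfold fsum in *; simpl; [reflexivity|].
  rewrite IH. destruct (length L); simpl; lra.
Qed.

Lemma lse_lip {A} (a b : A -> R) L e : L <> nil -> (forall w, In w L -> Rabs (a w - b w) <= e) ->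
  Rabs (ln (fsum (fun w => exp (a w)) L) - ln (fsum (fun w => exp (b w)) L)) <= e.
Proof.
  intros HL H.
  assert (Ha := fsum_pos a L HL). assert (Hb := fsum_pos b L HL).
  assert (K : forall a b : A -> R, (forall w, In w L -> a w <= b w + e) ->
            ln (fsum (fun w => exp (a w)) L) <= e + ln (fsum (fun w => exp (b w)) L)).
  { intros a' b' H'. rewrite <- (ln_exp e). rewrite <- ln_mult by (apply exp_pos || apply fsum_pos; auto).
    apply my_ln_le; [apply fsum_pos; auto|].
    rewrite <- (fsum_scal (fun w => exp e * exp (b' w)) (fun w => exp (b' w)) (exp e) L) by (intros; reflexivity).
    apply fsum_le. intros w Hw. rewrite <- exp_plus. apply my_exp_le. specialize (H' w Hw). lra. }
  apply Rabs_le. split.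
  - assert (ln (fsum (fun w => exp (b w)) L) <= e + ln (fsum (fun w => exp (a w)) L)).
    { apply K. intros w Hw. specialize (H w Hw). rewrite Rabs_minus_sym in H. apply abs_split in H. lra. }
    lra.
  - assert (ln (fsum (fun w => exp (a w)) L) <= e + ln (fsum (fun w => exp (b w)) L)).
    { apply K. intros w Hw. specialize (H w Hw). apply abs_split in H. lra. }
    lra.
Qed.

From mathcomp Require all_boot all_order all_algebra all_classical all_reals all_analysis Rstruct Rstruct_topology.

Lemma lip_aux C e : 0 < e -> C * (e / (Rabs C + 1)) < e /\ 0 < e / (Rabs C + 1).
Proof.
  intros He. pose proof (Rabs_pos C). pose proof (Rle_abs C).
  assert (Hr : 0 < / (Rabs C + 1)) by (apply Rinv_0_lt_compat; lra).
  assert (Hr1 : (Rabs C + 1) * / (Rabs C + 1) = 1) by (field; lra).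
  unfold Rdiv. set (r := / (Rabs C + 1)) in *. split; [|nra].
  assert (C * (e * r) <= Rabs C * (e * r)) by (apply Rmult_le_compat_r; nra).
  nra.
Qed.

Module Bridge.
Import all_boot all_order all_algebra all_classical all_reals all_analysis Rstruct Rstruct_topology.
Import Order.TTheory GRing.Theory Num.Theory.
Import numFieldNormedType.Exports.
Local Open Scope classical_set_scope.

Definition tov {l : nat} (v : 'rV[R]_l) : vec :=
  fun i => match @insub nat (fun k => (k < l)%N) 'I_l i with Some j => v ord0 j | None => 0%R end.

Definition fromv (l : nat) (x : vec) : 'rV[R]_l := \row_(j < l) x (nat_of_ord j).

Lemma tov_fromv l x : veq l (tov (fromv l x)) x.
Proof.
move=> i /ssrnat.ltP il; rewrite /tov insubT /= mxE //.
Qed.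

Lemma tov_ge l (v : 'rV[R]_l) i : le l i -> tov v i = 0%R.
Proof. move=> /ssrnat.leP H; rewrite /tov insubF // ltnNge H //. Qed.

Lemma tov_lt l (v : 'rV[R]_l) (j : 'I_l) : tov v j = v ord0 j.
Proof. by rewrite /tov valK. Qed.


Lemma veq_sym l x y : veq l x y -> veq l y x.
Proof. by move=> H i il; rewrite H. Qed.

Lemma evt_vec (l : nat) (K : vec -> Prop) (f : vec -> R) (B C : R) (x0 : vec) :
  Rle 0 B ->
  (forall x y, veq l x y -> K x -> K y) ->
  (forall x y, veq l x y -> f x = f y) ->
  K x0 ->
  (forall x, K x -> forall i, lt i l -> Rle (Rabs (x i)) B) ->
  (forall x, (forall eps, Rlt 0 eps -> exists y, K y /\ forall i, lt i l -> Rlt (Rabs (y i - x i)) eps) -> K x) ->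
  (forall x y d, Rle 0 d -> (forall i, lt i l -> Rle (Rabs (y i - x i)) d) -> Rle (Rabs (f y - f x)) (C * d)) ->
  exists x, K x /\ forall y, K y -> Rle (f y) (f x).
Proof.
move=> B0 HK Hf Kx0 HB HC HL.
pose A := [set v : 'rV[R]_l | K (tov v)].
pose g := fun v : 'rV[R]_l => f (tov v).
have A0 : A !=set0.
  by exists (fromv l x0); apply: (HK x0); [apply: veq_sym; apply: tov_fromv|].
have cA : compact A.
  apply: bounded_closed_compact.
    rewrite /bounded_set /= /bounded_near.
    exists B; split; first exact: num_real.
    move=> M HM v Av /=.
    have B0' : (0 <= B)%R by apply/RleP.
    change (mx_norm v <= M)%R; rewrite mx_normrE; apply: Order.POrderTheory.bigmax_le => [|[i j] _] /=.
      exact: (le_trans B0' (ltW HM)).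
    rewrite (ord1 i) -tov_lt -RabsE.
    apply: (le_trans _ (ltW HM)); apply/RleP; apply: HB => //.
    by apply/ssrnat.ltP.
  move=> v clv.
  apply: HC => eps eps0.
  have e0 : (0 < eps)%R by apply/RltP.
  have [w [Aw bw]] := clv _ (nbhsx_ballx v _ e0).
  exists (tov w); split => // i il.
  have il' : (i < l)%N by apply/ssrnat.ltP.
  have -> : i = nat_of_ord (Ordinal il') by [].
  rewrite !tov_lt RabsE; apply/RltP.
  case: bw => _ /(_ ord0 (Ordinal il')).
  by rewrite -ball_normE /ball_ /= distrC.
have cg : {within A, continuous g}.
  apply: continuous_subspaceT => v; rewrite /continuous_at.
  apply/(@cvgrPdist_lt _ R^o _ (nbhs v) (nbhs_filter v)) => e e0.
  have e0' : Rlt 0 e by apply/RltP.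
  have [Hlt d0] := lip_aux C e e0'.
  apply/nbhs_ballP; exists (e / (Rabs C + 1))%coqR; first by apply/RltP.
  move=> t bt /=.
  rewrite /g -RabsE; apply/RltP.
  rewrite Rabs_minus_sym.
  apply: Rle_lt_trans Hlt.
  apply: HL; first by apply: Rlt_le.
  move=> i il.
  have il' : (i < l)%N by apply/ssrnat.ltP.
  have -> : i = nat_of_ord (Ordinal il') by [].
  rewrite !tov_lt RabsE; apply/RleP/ltW.
  case: bt => _ /(_ ord0 (Ordinal il')).
  move=> bb; rewrite distrC; move: bb; rewrite /ball /=; done.
have [c cA' cmax] := compact_EVT_max A0 cA cg.
exists (tov c); split; first by move: cA'; rewrite inE.
move=> y Ky.
have Ay : A (fromv l y).
  by apply: (HK y); [apply: veq_sym; apply: tov_fromv|].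
have := cmax (fromv l y); rewrite inE => /(_ Ay).
rewrite /g (Hf (tov (fromv l y)) y (tov_fromv l y)) => /RleP //.
Qed.

End Bridge.


Theorem theorem4
  (Delta : list nat) (Phi : list formula) (Omega : list world)
  (m : nat) (A : nat -> vec) (c : vec) (eta : R) (theta : vec) :
  NoDup Delta ->
  NoDup Omega ->
  Omega <> nil ->
  (forall w, In w Omega -> world_over Delta w) ->
  max_indep_system m (length Phi) A c (RMP Delta Phi Omega) ->
  0 < eta ->
  RMP Delta Phi Omega theta ->
  eta_interior m (length Phi) A c (RMP Delta Phi Omega) eta theta ->
  (exists lam : vec,
      is_maximizer Delta Phi Omega theta lam /\
      satisfies m (length Phi) A (fun _ => 0) lam) /\
  (forall lam : vec,
      is_maximizer Delta Phi Omega theta lam ->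
      satisfies m (length Phi) A (fun _ => 0) lam ->
      norm2 (length Phi) lam <= ln (INR (length Omega)) / eta).
Proof.
  intros _ _ HOm _ [Hmax1 [Hind _]] Heta Htheta Hint.
  unfold RMP in *.
  set (l := length Phi) in *.
  set (Q := QPhi Delta Phi) in *.
  set (pts := map Q Omega) in *.
  set (w0 := (fun _ : gatom => false) : world).
  set (LSE := fun lam => fsum (fun w => exp (inner l lam (Q w))) Omega).
  assert (Ldual_eq : forall lam, Ldual Delta Phi Omega theta lam = inner l lam theta - ln (LSE lam))
    by reflexivity.
  assert (Hlen : length pts = length Omega) by (unfold pts; apply length_map).
  assert (F0 : (0 < length pts)%nat) by (rewrite Hlen; destruct Omega; [congruence|simpl; lia]).
  assert (Fp : forall k, (k < length pts)%nat -> nth k pts dv = Q (nth k Omega w0)).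
  { intros k Hk. rewrite (@nth_indep _ pts k dv (Q w0) Hk). unfold pts. apply map_nth. }
  assert (Fin : forall w, In w Omega -> exists k, (k < length pts)%nat /\ nth k pts dv = Q w).
  { intros w Hw. destruct (In_nth Omega w w0 Hw) as [k [Hk Hkw]].
    exists k. split; [lia|]. rewrite Fp by lia. rewrite Hkw. reflexivity. }
  assert (S1 : forall x, in_conv_hull l pts x -> satisfies m l A c x).
  { intros x Hx j Hj. unfold mat_vec.
    apply (hull_inner_const l pts (A j) (c j) x Hx). intros k Hk.
    apply (vertices_to_points l pts (A j) (c j) F0); [|exact Hk].
    intros v Hv. apply (Hmax1 v Hv j Hj). }
  assert (Hpts_hull : forall w, In w Omega -> in_conv_hull l pts (Q w)).
  { intros w Hw. destruct (Fin w Hw) as [k [Hk <-]]. apply pt_in_hull. exact Hk. }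
  assert (LSEpos : forall lam, 0 < LSE lam) by (intros; apply fsum_pos; exact HOm).
  assert (Hupper : forall lam x, in_conv_hull l pts x -> inner l lam x <= ln (LSE lam)).
  { intros lam x Hx.
    destruct (argmax_idx (length pts) (fun k => inner l lam (nth k pts dv)) F0) as [k0 [Hk0 Hm]].
    apply Rle_trans with (inner l lam (nth k0 pts dv)).
    - apply (hull_inner_le l pts lam _ x Hx). exact Hm.
    - rewrite <- (ln_exp (inner l lam (nth k0 pts dv))). apply my_ln_le; [apply exp_pos|].
      rewrite Fp by exact Hk0. unfold LSE.
      apply (fsum_term (fun w => exp (inner l lam (Q w)))); [intros; left; apply exp_pos|].
      apply nth_In. lia. }
  assert (Hcoer : forall lam, satisfies m l A (fun _ => 0) lam ->
            Ldual Delta Phi Omega theta lam <= - eta * norm2 l lam).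
  { intros lam Hlam. rewrite Ldual_eq.
    assert (HN := norm2_nonneg l lam).
    destruct (Rle_lt_or_eq_dec _ _ HN) as [HNp|HN0].
    - set (N2 := norm2 l lam) in *.
      set (th' := fun i => theta i + (eta / N2) * lam i).
      assert (Hs : satisfies m l A c th').
      { intros j Hj. unfold mat_vec, th'.
        rewrite inner_plus_r, inner_scal_r.
        assert (S1' := S1 theta Htheta j Hj). assert (Hl := Hlam j Hj). unfold mat_vec in S1', Hl.
        rewrite S1', Hl. ring. }
      assert (Hd : norm2 l (fun i => th' i - theta i) <= eta).
      { replace (norm2 l (fun i => th' i - theta i)) with (norm2 l (fun i => (eta / N2) * lam i)).
        - rewrite norm2_scal. rewrite Rabs_right.
          + fold N2. right; field; lra.
          + apply Rle_ge; apply Rlt_le, Rdiv_lt_0_compat; lra.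
        - unfold norm2. f_equal. apply inner_ext; intros i _; unfold th'; ring. }
      assert (Hin := Hint th' Hs Hd).
      assert (Hup := Hupper lam th' Hin).
      unfold th' in Hup. rewrite inner_plus_r, inner_scal_r in Hup.
      rewrite <- (norm2_sq l lam) in Hup. fold N2 in Hup.
      replace (eta / N2 * (N2 * N2)) with (eta * N2) in Hup by (field; lra).
      lra.
    - rewrite <- HN0. assert (Hup := Hupper lam theta Htheta). lra. }
  assert (HL0 : Ldual Delta Phi Omega theta (fun _ => 0) = - ln (INR (length Omega))).
  { rewrite Ldual_eq, inner_zero_l. unfold LSE.
    rewrite (fsum_scal _ (fun _ => 1) 1 Omega).
    - rewrite fsum_const1. rewrite Rmult_1_l. ring.
    - intros w _. rewrite inner_zero_l, exp_0. ring. }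
  assert (Hinv : forall mu, exists lam, satisfies m l A (fun _ => 0) lam /\
             Ldual Delta Phi Omega theta lam = Ldual Delta Phi Omega theta mu).
  { intros mu. destruct (proj_exists l m A Hind mu) as [nu Hnu].
    set (lam := fun k => mu k - comb m A nu k).
    exists lam. split.
    - intros i Hi. unfold mat_vec. apply Hnu. exact Hi.
    - set (s := sumR m (fun j => nu j * c j)).
      assert (Hx : forall x, satisfies m l A c x -> inner l lam x = inner l mu x - s).
      { intros x Hx. unfold lam. rewrite inner_minus_l. f_equal. rewrite inner_comm, inner_comb.
        unfold s. apply sumR_ext. intros j Hj. rewrite inner_comm. specialize (Hx j Hj).
        unfold mat_vec in Hx. rewrite Hx. reflexivity. }
      rewrite !Ldual_eq. rewrite (Hx theta (S1 theta Htheta)).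
      assert (E : LSE lam = exp (- s) * LSE mu).
      { unfold LSE. apply fsum_scal. intros w Hw. rewrite (Hx (Q w) (S1 _ (Hpts_hull w Hw))).
        rewrite <- exp_plus. f_equal. ring. }
      rewrite E, ln_mult by (apply exp_pos || apply LSEpos). rewrite ln_exp. ring. }
  set (Cq := fsum (fun w => sumR l (fun i => Rabs (Q w i))) Omega).
  set (Ct := sumR l (fun i => Rabs (theta i))).
  assert (HLip : forall x y d, 0 <= d -> (forall i, (i < l)%nat -> Rabs (y i - x i) <= d) ->
      Rabs (Ldual Delta Phi Omega theta y - Ldual Delta Phi Omega theta x) <= (Ct + Cq) * d).
  { intros x y d Hd H. rewrite !Ldual_eq.
    assert (H1 : Rabs (inner l y theta - inner l x theta) <= Ct * d).
    { rewrite (inner_comm l y), (inner_comm l x). apply inner_lip. exact H. }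
    assert (H2 : Rabs (ln (LSE y) - ln (LSE x)) <= Cq * d).
    { unfold LSE. apply lse_lip; [exact HOm|]. intros w Hw.
      apply Rle_trans with (sumR l (fun i => Rabs (Q w i)) * d).
      - rewrite (inner_comm l y), (inner_comm l x). apply inner_lip. exact H.
      - apply Rmult_le_compat_r; [exact Hd|]. unfold Cq.
        apply (fsum_term (fun w => sumR l (fun i => Rabs (Q w i)))); [|exact Hw].
        intros; apply sumR_nonneg; intros; apply Rabs_pos. }
    apply abs_split in H1. apply abs_split in H2. rewrite Rmult_plus_distr_r.
    apply Rabs_le. lra. }
  set (Rb := ln (INR (length Omega)) / eta).
  assert (Hn1 : 1 <= INR (length Omega)).
  { destruct Omega as [|w Om]; [congruence|]. simpl length. rewrite S_INR. pose proof (pos_INR (length Om)). lra. }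
  assert (Rb0 : 0 <= Rb).
  { unfold Rb, Rdiv. apply Rmult_le_pos; [|left; apply Rinv_0_lt_compat; exact Heta]. rewrite <- ln_1. apply my_ln_le; lra. }
  set (K := fun lam => satisfies m l A (fun _ => 0) lam /\ forall i, (i < l)%nat -> Rabs (lam i) <= Rb).
  assert (K0 : K (fun _ => 0)).
  { split.
    - intros j Hj. unfold mat_vec. apply inner_zero_r.
    - intros i Hi. rewrite Rabs_R0. exact Rb0. }
  assert (HKveq : forall x y, veq l x y -> K x -> K y).
  { intros x y Hxy [Kx1 Kx2]. split.
    - intros j Hj. transitivity (mat_vec l A x j); [|apply Kx1; exact Hj]. unfold mat_vec.
      apply inner_ext; [intros i _; reflexivity|intros i Hi; symmetry; apply Hxy; exact Hi].
    - intros i Hi. rewrite <- (Hxy i Hi). apply Kx2. exact Hi. }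
  assert (Hfveq : forall x y, veq l x y -> Ldual Delta Phi Omega theta x = Ldual Delta Phi Omega theta y).
  { intros x y Hxy. rewrite !Ldual_eq.
    rewrite (inner_ext l x y theta theta Hxy (fun i _ => eq_refl)).
    assert (E : LSE x = LSE y).
    { unfold LSE. rewrite (fsum_scal _ (fun w => exp (inner l y (Q w))) 1 Omega); [ring|].
      intros w _. rewrite (inner_ext l x y (Q w) (Q w) Hxy (fun i _ => eq_refl)). ring. }
    rewrite E. reflexivity. }
  assert (HBd : forall x, K x -> forall i, (i < l)%nat -> Rabs (x i) <= Rb).
  { intros x [_ Hx]. exact Hx. }
  assert (Hcl : forall x, (forall eps, 0 < eps -> exists y, K y /\ forall i, (i < l)%nat -> Rabs (y i - x i) < eps) -> K x).
  { intros x H. split.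
    - intros j Hj. unfold mat_vec.
      assert (HSj : 0 <= sumR l (fun i => Rabs (A j i))) by (apply sumR_nonneg; intros; apply Rabs_pos).
      assert (Hz : Rabs (inner l (A j) x) <= 0).
      { apply (le_C_eps _ _ HSj). intros eps He.
        destruct (H eps He) as [y [[Hy1 _] Hy2]].
        assert (Hy := Hy1 j Hj). unfold mat_vec in Hy.
        replace (inner l (A j) x) with (inner l (A j) x - inner l (A j) y) by (rewrite Hy; ring).
        apply inner_lip. intros i Hi. rewrite Rabs_minus_sym. left. apply Hy2. exact Hi. }
      apply abs_split in Hz. lra.
    - intros i Hi. apply le_eps. intros eps He.
      destruct (H eps He) as [y [[_ Hy] Hy2]].
      specialize (Hy i Hi). specialize (Hy2 i Hi).
      apply abs_split in Hy. assert (Hy2' : Rabs (y i - x i) <= eps) by lra. apply abs_split in Hy2'.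
      apply Rabs_le. lra. }
  destruct (Bridge.evt_vec l K (Ldual Delta Phi Omega theta) Rb (Ct + Cq) (fun _ => 0)
             Rb0 HKveq Hfveq K0 HBd Hcl HLip) as [ls [Kls Hls]].
  split.
  - exists ls. split; [|exact (proj1 Kls)].
    intros mu. destruct (Hinv mu) as [lam [Hlam Heq]]. rewrite <- Heq.
    destruct (classic (forall i, (i < l)%nat -> Rabs (lam i) <= Rb)) as [Hb|Hb].
    + apply Hls. split; assumption.
    + apply not_all_ex_not in Hb. destruct Hb as [i Hi]. apply imply_to_and in Hi.
      destruct Hi as [Hi Hgt]. apply Rnot_le_lt in Hgt.
      assert (Hn := coord_le_norm2 l lam i Hi).
      assert (Hc := Hcoer lam Hlam).
      assert (Hl0 := Hls _ K0). rewrite HL0 in Hl0.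
      assert (HetaRb : eta * Rb = ln (INR (length Omega))) by (unfold Rb; field; lra).
      assert (eta * Rb < eta * norm2 l lam) by (apply Rmult_lt_compat_l; lra).
      lra.
  - intros lam Hmax Hlam.
    assert (Hc := Hcoer lam Hlam). assert (H0 := Hmax (fun _ => 0)). rewrite HL0 in H0.
    assert (HetaRb : eta * Rb = ln (INR (length Omega))) by (unfold Rb; field; lra).
    apply Rmult_le_reg_l with eta; [lra|]. rewrite HetaRb. lra.
Qed.
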